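(* A reflexive Banach space $X$ has the $\mathbf{L}_{p,p}$-nu if and only if $X^*$ has the $\mathbf{L}_{p,p}$-nu.
   Context: For a Banach space $X$ over $\mathbb{K}\in\{\mathbb{R},\mathbb{C}\}$: $\Pi(X)=\{(x,x^* )\in S_X\times S_{X^*}: x^*(x)=1\}$; for $T\in\mathcal{L}(X)$ (bounded linear operators on $X$), $v(T)=\sup\{|x^*(Tx)|:(x,x^* )\in\Pi(X)\}$. $X$ has the $\mathbf{L}_{p,p}$-nu if for every $\varepsilon>0$ and $(x,x^* )\in\Pi(X)$ there is $\eta(\varepsilon,(x,x^* ))>0$ such that whenever $T\in\mathcal{L}(X)$ with $v(T)=1$ satisfies $|x^*(Tx)|>1-\eta(\varepsilon,(x,x^* ))$, there is $S\in\mathcal{L}(X)$ with $v(S)=1$, $|x^*(Sx)|=1$ and $\|S-T\|<\varepsilon$. *)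

(* Defs.v *)
From HB Require Import structures.
From mathcomp Require Import all_boot all_order all_algebra.
From mathcomp Require Import all_classical all_reals all_analysis.
From mathcomp Require Export complex.

Set Implicit Arguments.
Unset Strict Implicit.
Unset Printing Implicit Defensive.

Import Order.TTheory GRing.Theory Num.Theory.
Import numFieldNormedType.Exports.
Local Open Scope classical_set_scope.
Local Open Scope ring_scope.

(** The supremum (least upper bound) of a set of scalars, when it exists
    (for K = R or K = C and a nonempty bounded set of reals it always does;
    the order on C is the usual partial order of MathComp). *)
Definition supK {K : numFieldType} (A : set K) : K := xget 0 (supremums A).

(** A normed space presented as a linear subspace [D] of a K-vector space [V]
    together with a norm [N] on it.  A Banach space X is presented as
    (X, setT, normr); its dual X^* as (X -> K, bounded linear functionals,
    dual norm). *)
Section GenericNormedSpace.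
Variables (K : numFieldType) (V : lmodType K) (D : set V) (N : V -> K).

Definition unit_ball : set V := [set v | D v /\ N v <= 1].

Definition bd_functional (phi : V -> K) : Prop :=
  (forall (a : K) (u v : V), D u -> D v -> phi (a *: u + v) = a * phi u + phi v)
  /\ exists C : K, forall v, D v -> `|phi v| <= C * N v.

Definition fnorm (phi : V -> K) : K := supK [set `|phi v| | v in unit_ball].

Definition bd_operator (T : V -> V) : Prop :=
  (forall v, D v -> D (T v))
  /\ (forall (a : K) (u v : V), D u -> D v -> T (a *: u + v) = a *: T u + T v)
  /\ exists C : K, forall v, D v -> N (T v) <= C * N v.

Definition opnorm (T : V -> V) : K := supK [set N (T v) | v in unit_ball].

Definition Pi : set (V * (V -> K)) :=
  [set p | D p.1 /\ N p.1 = 1 /\ bd_functional p.2 /\ fnorm p.2 = 1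
           /\ p.2 p.1 = 1].

Definition numrad (T : V -> V) : K := supK [set `|p.2 (T p.1)| | p in Pi].

Definition Lpp_nu : Prop :=
  forall eps : K, 0 < eps -> forall p, Pi p ->
  exists2 eta : K, 0 < eta &
    forall T, bd_operator T -> numrad T = 1 -> 1 - eta < `|p.2 (T p.1)| ->
    exists S, [/\ bd_operator S, numrad S = 1, `|p.2 (S p.1)| = 1
                & opnorm (fun v => S v - T v) < eps].

End GenericNormedSpace.

Section Concrete.
Variable K : numFieldType.

Definition dual_set (X : normedModType K) : set (X -> K^o) :=
  fun f => bd_functional (V := X) setT (fun x : X => `|x|) f.

Definition dual_norm (X : normedModType K) (f : X -> K^o) : K :=
  fnorm (V := X) setT (fun x : X => `|x|) f.

Definition has_Lpp_nu (X : normedModType K) : Prop :=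
  Lpp_nu (V := X) setT (fun x : X => `|x|).

Definition dual_has_Lpp_nu (X : normedModType K) : Prop :=
  Lpp_nu (V := X -> K^o) (@dual_set X) (@dual_norm X).

(** X is reflexive: the canonical embedding X -> X^** is onto, i.e. every
    bounded linear functional on X^* is evaluation at some x in X. *)
Definition reflexive_space (X : normedModType K) : Prop :=
  forall Phi : (X -> K^o) -> K,
    bd_functional (@dual_set X) (@dual_norm X) Phi ->
    exists x : X, forall f, dual_set f -> Phi f = f x.

End Concrete.

(* Main.v *)
Require Import Defs.
From HB Require Import structures.
From mathcomp Require Import all_boot all_order all_algebra.
From mathcomp Require Import all_classical all_reals all_analysis.
From mathcomp Require Import complex.
From mathcomp Require Import ring lra.
Set Implicit Arguments.
Unset Strict Implicit.
Unset Printing Implicit Defensive.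
Import Order.TTheory GRing.Theory Num.Theory.
Import numFieldNormedType.Exports.
Local Open Scope classical_set_scope.
Local Open Scope ring_scope.

Definition sup_ok (K : numFieldType) : Prop :=
  forall A : set K, (exists a, A a) -> (forall a, A a -> 0 <= a) ->
  (exists M, forall a, A a -> a <= M) -> supremums A (supK A).

Lemma sup_ok_real (R : realType) : sup_ok R.
Proof.
move=> A [a Aa] A0 [M AM].
rewrite /supK; apply: xgetPex; exists (sup A).
have hs : has_sup A by split; [exists a | exists M].
split; first exact: sup_upper_bound.
by move=> y yub; apply: ge_sup => //; exists a.
Qed.

Section SupC.
Local Notation Re := complex.Re.
Local Notation Im := complex.Im.
Local Open Scope complex_scope.
Lemma sup_ok_complex (R : realType) : sup_ok R[i].
Proof.
move=> A [a Aa] A0 [M AM].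
rewrite /supK; apply: xgetPex.
pose B := [set Re z | z in A].
have hs : has_sup B.
  split; first by exists (Re a); exists a.
  exists (Re M) => _ [z Az <-]; have := AM z Az; by rewrite lecE => /andP[].
have AR z : A z -> z = (Re z)%:C.
  case: z => x y Az; have := A0 _ Az; rewrite lecE /= => /andP[/eqP h _]; by rewrite h.
exists ((sup B)%:C); split.
  move=> z Az; rewrite (AR z Az) lecR; apply: sup_upper_bound => //; by exists z.
move=> y yub.
have yIm : Im y = 0.
  by have := yub a Aa; rewrite (AR a Aa) lecE /= => /andP[/eqP -> _].
rewrite lecE /= yIm eqxx /=; apply: ge_sup; first by exists (Re a); exists a.
move=> _ [z Az <-]; have := yub z Az; by rewrite lecE => /andP[].
Qed.

End SupC.

Section SupK.
Variable K : numFieldType.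

Lemma supK_max (A : set K) s : A s -> (forall a, A a -> a <= s) -> supK A = s.
Proof.
move=> As ub; rewrite /supK; apply: xget_subset1; last exact: is_subset1_supremums.
by split => // y yub; exact: yub.
Qed.

Hypothesis Hsup : sup_ok K.

Lemma supK_ub (A : set K) a : A a -> (forall a, A a -> 0 <= a) ->
  (exists M, forall a, A a -> a <= M) -> a <= supK A.
Proof. by move=> Aa A0 AM; have [ub _] := Hsup (ex_intro _ a Aa) A0 AM; exact: ub. Qed.

Lemma supK_le (A : set K) M : (exists a, A a) -> (forall a, A a -> 0 <= a) ->
  (forall a, A a -> a <= M) -> supK A <= M.
Proof.
move=> An A0 AM; have [_ lb] := Hsup An A0 (ex_intro _ M AM); exact: lb.
Qed.

Lemma supK_ge0 (A : set K) a : A a -> (forall a, A a -> 0 <= a) ->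
  (exists M, forall a, A a -> a <= M) -> 0 <= supK A.
Proof. by move=> Aa A0 AM; apply: le_trans (A0 _ Aa) (supK_ub Aa A0 AM). Qed.

End SupK.

Section Ext.
Variables (K : numFieldType) (V : lmodType K) (D : set V) (N : V -> K).

Lemma fnorm_ext (phi psi : V -> K) : (forall v, D v -> phi v = psi v) ->
  fnorm D N phi = fnorm D N psi.
Proof.
move=> e; rewrite /fnorm; congr supK; apply/seteqP; split => _ [v [Dv Nv] <-];
  by exists v => //; rewrite e.
Qed.

Lemma opnorm_ext (T T' : V -> V) : (forall v, D v -> T v = T' v) ->
  opnorm D N T = opnorm D N T'.
Proof.
move=> e; rewrite /opnorm; congr supK; apply/seteqP; split => _ [v [Dv Nv] <-];
  by exists v => //; rewrite e.
Qed.

Lemma numrad_ext (T T' : V -> V) : (forall v, D v -> T v = T' v) ->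
  numrad D N T = numrad D N T'.
Proof.
move=> e; rewrite /numrad; congr supK; apply/seteqP; split => _ [p Pp <-];
  by exists p => //; rewrite e //; case: Pp.
Qed.


End Ext.

Section Xspace.
Variables (K : numFieldType) (X : normedModType K).
Hypothesis Hsup : sup_ok K.
Local Notation NX := (fun x : X => `|x|).
Local Notation bdf := (bd_functional (V := X) setT NX).
Local Notation bdo := (bd_operator (V := X) setT NX).

Lemma bdf_lin (f : X -> K) : bdf f -> forall a u v, f (a *: u + v) = a * f u + f v.
Proof. by case=> lin _ a u v; apply: lin. Qed.

Lemma bdf0 (f : X -> K) : bdf f -> f 0 = 0.
Proof.
move=> /bdf_lin lin; have := lin 1 0 0; rewrite scale1r addr0 mul1r => h.
by apply: (addrI (f 0)); rewrite addr0 -h.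
Qed.

Lemma bdfZ (f : X -> K) : bdf f -> forall a u, f (a *: u) = a * f u.
Proof. by move=> hf a u; have := bdf_lin hf a u 0; rewrite addr0 bdf0 // addr0. Qed.

Lemma bdfB (f : X -> K) : bdf f -> forall u v, f (u - v) = f u - f v.
Proof.
move=> hf u v; have := bdf_lin hf (-1) v u.
by rewrite scaleN1r mulN1r addrC => ->; rewrite addrC.
Qed.

Lemma bdoZ (T : X -> X) : bdo T -> forall a u, T (a *: u) = a *: T u.
Proof.
move=> [_ [lin _]] a u.
have T0 : T 0 = 0.
  have := lin 1 0 0 I I; rewrite scale1r addr0 scale1r => h.
  by apply: (addrI (T 0)); rewrite addr0 -h.
by have := lin a u 0 I I; rewrite addr0 T0 addr0.
Qed.

Definition ubsup (g : X -> K) := supK [set g v | v in unit_ball setT NX].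

Lemma ubsup_prop (g : X -> K) : (forall v, 0 <= g v) ->
  (forall a v, g (a *: v) = `|a| * g v) ->
  (exists C, forall v, g v <= C * `|v|) ->
  0 <= ubsup g /\ forall v, g v <= ubsup g * `|v|.
Proof.
move=> g0 gZ [C hC].
have A0 : forall a, [set g v | v in unit_ball setT NX] a -> 0 <= a.
  by move=> _ [v _ <-].
have AM : exists M, forall a, [set g v | v in unit_ball setT NX] a -> a <= M.
  exists `|C| => _ [v [_ v1] <-].
  apply: le_trans (hC v) _.
  have h : 0 <= C * `|v| by apply: le_trans (g0 v) (hC v).
  rewrite -(ger0_norm h) normrM normr_id.
  by apply: ler_piMr => //.
have Aa : [set g v | v in unit_ball setT NX] (g 0) by exists 0 => //; split => //; rewrite normr0.
split; first exact (supK_ge0 Hsup Aa A0 AM).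
move=> v; have [->|v0] := eqVneq v 0.
  have := gZ 0 0; rewrite scale0r normr0 mul0r => ->; by rewrite normr0 mulr0.
have nv : `|v| != 0 by rewrite normr_eq0.
have hu : [set g v | v in unit_ball setT NX] (g (`|v|^-1 *: v)).
  exists (`|v|^-1 *: v) => //; split => //.
  by rewrite normrZ normfV normr_id mulVf.
have := supK_ub Hsup hu A0 AM; rewrite gZ normfV normr_id.
have vp : 0 < `|v| by rewrite normr_gt0.
by rewrite ler_pdivrMl // mulrC.
Qed.

Lemma ubsup_le (g : X -> K) M : (forall v, 0 <= g v) ->
  (forall v, `|v| <= 1 -> g v <= M) -> ubsup g <= M.
Proof.
move=> g0 hM; apply: (supK_le Hsup).
- by exists (g 0); exists 0 => //; split => //; rewrite normr0.
- by move=> _ [v _ <-].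
- by move=> _ [v [_ v1] <-]; exact: hM.
Qed.

Lemma bdf_bound (f : X -> K) : bdf f -> exists C, forall v, `|f v| <= C * `|v|.
Proof. move=> [_ [C h]]; exists C => v; exact: (h v I). Qed.

Lemma fnorm_prop (f : X -> K) : bdf f ->
  0 <= fnorm setT NX f /\ forall v, `|f v| <= fnorm setT NX f * `|v|.
Proof.
move=> hf; apply: (ubsup_prop (g := fun v => `|f v|)) => //.
- by move=> a v; rewrite bdfZ // normrM.
- exact: bdf_bound.
Qed.

Lemma fnorm_le (f : X -> K) M : (forall v, `|v| <= 1 -> `|f v| <= M) ->
  fnorm setT NX f <= M.
Proof. by move=> h; apply: (ubsup_le (g := fun v => `|f v|)). Qed.

Lemma opnorm_prop (T : X -> X) : bdo T ->
  0 <= opnorm setT NX T /\ forall v, `|T v| <= opnorm setT NX T * `|v|.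
Proof.
move=> hT; apply: (ubsup_prop (g := fun v => `|T v|)) => //.
- by move=> a v; rewrite bdoZ // normrZ.
- by case: hT => _ [_ [C hC]]; exists C => v; exact: (hC v I).
Qed.

Lemma opnorm_le (T : X -> X) M : (forall v, `|v| <= 1 -> `|T v| <= M) ->
  opnorm setT NX T <= M.
Proof. by move=> h; apply: (ubsup_le (g := fun v => `|T v|)). Qed.

End Xspace.

Section Dual.
Variables (K : numFieldType) (X : normedModType K).
Hypothesis Hsup : sup_ok K.
Local Notation NX := (fun x : X => `|x|).
Local Notation bdf := (bd_functional (V := X) setT NX).
Local Notation bdo := (bd_operator (V := X) setT NX).
Local Notation Xd := (X -> K^o).
Local Notation Dd := (@dual_set K X).
Local Notation Nd := (@dual_norm K X).
Hypothesis HB : forall x : X, exists g : X -> K^o, Dd g /\ Nd g <= 1 /\ g x = `|x|.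

Definition adj (T : X -> X) : Xd -> Xd := fun g => fun x => g (T x).
Definition ev (x : X) : Xd -> K := fun g => g x.

Lemma Nd_prop (g : Xd) : Dd g -> 0 <= Nd g /\ forall v, `|g v| <= Nd g * `|v|.
Proof. by move=> hg; apply: fnorm_prop. Qed.

Lemma sepX (y z : X) : (forall g, Dd g -> g y = g z) -> y = z.
Proof.
move=> h; have [g [Dg [_ gyz]]] := HB (y - z).
apply/eqP; rewrite -subr_eq0 -normr_eq0 -gyz.
by rewrite (bdfB Dg) h // subrr.
Qed.

Lemma Dd0 : Dd 0.
Proof.
split; first by move=> a u v _ _ /=; rewrite mulr0 addr0.
by exists 0 => v _; rewrite mul0r /= normr0.
Qed.

Lemma Nd0 : Nd 0 = 0.
Proof.
rewrite /dual_norm /fnorm; apply: supK_max.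
  by exists 0; [split => //; rewrite normr0 | rewrite /= normr0].
by move=> _ [v _ <-]; rewrite /= normr0.
Qed.

Lemma ev_bd (x : X) : bd_functional Dd Nd (ev x).
Proof.
split; first by move=> a u v _ _.
exists `|x| => g Dg; rewrite mulrC; exact: (Nd_prop Dg).2.
Qed.

Lemma fnorm_ev (x : X) : fnorm Dd Nd (ev x) = `|x|.
Proof.
rewrite /fnorm; apply: supK_max.
  have [g [Dg [g1 gx]]] := HB x.
  by exists g; [split | rewrite /ev gx normr_id].
move=> _ [g [Dg g1] <-]; rewrite /ev.
apply: le_trans ((Nd_prop Dg).2 x) _.
by apply: ler_piMl => //; exact: normr_ge0.
Qed.

Lemma Pi_up (x : X) (f : Xd) : Pi setT NX (x, f) -> Pi Dd Nd (f, ev x).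
Proof.
move=> [_ [x1 [bf [f1 fx]]]]; split => //; split => //; split; first exact: ev_bd.
by split => //; rewrite fnorm_ev.
Qed.

Lemma Pi_down (p : Xd * (Xd -> K)) : reflexive_space X -> Pi Dd Nd p ->
  exists x, Pi setT NX (x, p.1) /\ forall g, Dd g -> p.2 g = g x.
Proof.
move=> refl [D1 [N1 [bd2 [f2 p21]]]].
have [x hx] := refl _ bd2.
exists x; split => //; split => //; split.
  by rewrite -fnorm_ev -f2; apply: fnorm_ext => g Dg; rewrite hx.
by split => //; split => //; rewrite -hx.
Qed.

Lemma adj_Dd (T : X -> X) (g : Xd) : bdo T -> Dd g -> Dd (adj T g).
Proof.
move=> hT Dg; split.
  move=> a u v _ _; rewrite /adj.
  by case: hT => _ [lin _]; rewrite lin //; exact: (bdf_lin Dg).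
have [_ hT'] := opnorm_prop Hsup hT.
exists (Nd g * opnorm setT NX T) => v _; rewrite /adj.
apply: le_trans ((Nd_prop Dg).2 _) _; rewrite -mulrA.
by apply: ler_wpM2l; [exact: (Nd_prop Dg).1 | exact: hT'].
Qed.

Lemma adj_Nd (T : X -> X) (g : Xd) : bdo T -> Dd g ->
  Nd (adj T g) <= opnorm setT NX T * Nd g.
Proof.
move=> hT Dg; rewrite /dual_norm; apply: fnorm_le => // v v1; rewrite /adj.
apply: le_trans ((Nd_prop Dg).2 _) _.
have [hop0 hT'] := opnorm_prop Hsup hT.
rewrite mulrC; apply: ler_wpM2r; first exact: (Nd_prop Dg).1.
apply: le_trans (hT' v) _; exact: ler_piMr.
Qed.

Lemma adj_bd (T : X -> X) : bdo T -> bd_operator Dd Nd (adj T).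
Proof.
move=> hT; split; first by move=> g; exact: adj_Dd.
split; first by move=> a u v _ _.
by exists (opnorm setT NX T) => g Dg; exact: adj_Nd.
Qed.

End Dual.

Section Dual2.
Variables (K : numFieldType) (X : normedModType K).
Hypothesis Hsup : sup_ok K.
Local Notation NX := (fun x : X => `|x|).
Local Notation bdf := (bd_functional (V := X) setT NX).
Local Notation bdo := (bd_operator (V := X) setT NX).
Local Notation Xd := (X -> K^o).
Local Notation Dd := (@dual_set K X).
Local Notation Nd := (@dual_norm K X).
Hypothesis HB : forall x : X, exists g : X -> K^o, Dd g /\ Nd g <= 1 /\ g x = `|x|.
Hypothesis refl : reflexive_space X.

Lemma numrad_adj (T : X -> X) (U : Xd -> Xd) : bdo T ->
  (forall g, Dd g -> U g = adj T g) -> numrad Dd Nd U = numrad setT NX T.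
Proof.
move=> hT e; rewrite (@numrad_ext _ _ Dd Nd _ _ e) /numrad; congr supK.
apply/seteqP; split => _ [p Pp <-].
  have [x [Px hx]] := Pi_down Hsup HB refl Pp.
  exists (x, p.1) => //=; rewrite hx //; apply: (adj_Dd Hsup) => //; by case: Pp.
exists (p.2, ev p.1) => /=; last by [].
by apply: (Pi_up Hsup HB); case: p Pp.
Qed.

Lemma Nd_ge0 (g : Xd) : Dd g -> 0 <= Nd g.
Proof. by move=> Dg; exact: (Nd_prop Hsup Dg).1. Qed.

Lemma opnorm_adj_le (T : X -> X) : bdo T ->
  opnorm Dd Nd (adj T) <= opnorm setT NX T.
Proof.
move=> hT; rewrite /opnorm; apply: (supK_le Hsup).
- by exists (Nd (adj T 0)); exists 0 => //; split; [exact: Dd0 | rewrite Nd0 ler01].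
- by move=> _ [g [Dg _] <-]; apply: Nd_ge0; exact: adj_Dd.
- move=> _ [g [Dg g1] <-]; apply: le_trans (adj_Nd Hsup hT Dg) _.
  by apply: ler_piMr => //; exact: (opnorm_prop Hsup hT).1.
Qed.

Lemma opnorm_adj_ge (T : X -> X) : bdo T ->
  opnorm setT NX T <= opnorm Dd Nd (adj T).
Proof.
move=> hT; apply: opnorm_le => // v v1.
have [g [Dg [g1 gx]]] := HB (T v).
rewrite -[X in X <= _]normr_id -gx.
have hA : [set Nd (adj T g) | g in unit_ball Dd Nd] (Nd (adj T g)) by exists g.
have A0 : forall a, [set Nd (adj T g) | g in unit_ball Dd Nd] a -> 0 <= a.
  by move=> _ [h [Dh _] <-]; apply: Nd_ge0; exact: adj_Dd.
have hM : exists M, forall a, [set Nd (adj T g) | g in unit_ball Dd Nd] a -> a <= M.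
  exists (opnorm setT NX T) => _ [h [Dh h1] <-]; apply: le_trans (adj_Nd Hsup hT Dh) _.
  by apply: ler_piMr => //; exact: (opnorm_prop Hsup hT).1.
have hle := supK_ub Hsup hA A0 hM.
apply: le_trans hle.
have := (Nd_prop Hsup (adj_Dd Hsup hT Dg)).2 v; rewrite /adj => h1.
apply: le_trans h1 _; apply: ler_piMr => //; exact: Nd_ge0 (adj_Dd Hsup hT Dg).
Qed.

Lemma preadj (U : Xd -> Xd) : bd_operator Dd Nd U ->
  exists T, bdo T /\ forall g, Dd g -> U g = adj T g.
Proof.
move=> [DU [linU [C hC]]].
have C' : forall g, Dd g -> Nd (U g) <= `|C| * Nd g.
  move=> g Dg; have h := hC g Dg.
  have h0 : 0 <= C * Nd g by apply: le_trans (Nd_ge0 (DU _ Dg)) h.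
  by apply: le_trans h _; rewrite -(ger0_norm h0) normrM (ger0_norm (Nd_ge0 Dg)).
have ex x : exists y : X, forall g, Dd g -> U g x = g y.
  apply: refl; split.
    by move=> a u v Du Dv; rewrite linU.
  exists (`|C| * `|x|) => g Dg.
  apply: le_trans ((Nd_prop Hsup (DU _ Dg)).2 x) _.
  rewrite mulrAC; apply: ler_wpM2r => //; exact: C'.
pose T x := xget 0 [set y : X | forall g, Dd g -> U g x = g y].
have hT x g : Dd g -> U g x = g (T x).
  by move=> Dg; have := xgetPex 0 (ex x); move=> /(_ g Dg).
exists T; split; last by move=> g Dg; apply/funext => x; rewrite /adj hT.
split => //; split.
  move=> a u v _ _; apply: sepX => // g Dg.
  rewrite -hT // (bdf_lin (DU _ Dg)) !hT //.
  by rewrite (bdf_lin Dg).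
exists `|C| => x _.
have [g [Dg [g1 gx]]] := HB (T x).
rewrite -normr_id -gx -hT //.
apply: le_trans ((Nd_prop Hsup (DU _ Dg)).2 x) _.
apply: ler_wpM2r => //; apply: le_trans (C' _ Dg) _.
by apply: ler_piMr.
Qed.

Lemma bdo_sub (S T : X -> X) : bdo S -> bdo T -> bdo (fun v => S v - T v).
Proof.
move=> [_ [linS [C1 h1]]] [_ [linT [C2 h2]]]; split => //; split.
  move=> a u v _ _; rewrite linS // linT // scalerBr.
  by rewrite opprD addrACA.
exists (`|C1| + `|C2|) => v _.
apply: le_trans (ler_normB _ _) _; rewrite mulrDl; apply: lerD.
  have h0 : 0 <= C1 * `|v| by apply: le_trans (normr_ge0 _) (h1 v I).
  by apply: le_trans (h1 v I) _; rewrite -(ger0_norm h0) normrM normr_id.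
have h0 : 0 <= C2 * `|v| by apply: le_trans (normr_ge0 _) (h2 v I).
by apply: le_trans (h2 v I) _; rewrite -(ger0_norm h0) normrM normr_id.
Qed.

Lemma adj_sub (S T : X -> X) (g : Xd) : Dd g ->
  adj S g - adj T g = adj (fun v => S v - T v) g.
Proof. by move=> Dg; apply/funext => x; rewrite /adj /= (bdfB Dg). Qed.

Lemma Lpp_dual_equiv : has_Lpp_nu X <-> dual_has_Lpp_nu X.
Proof.
split.
- move=> hX eps eps0 p Pp.
  have [x [Px hx]] := Pi_down Hsup HB refl Pp.
  have [eta eta0 heta] := hX eps eps0 _ Px.
  exists eta => // U bU nU hU.
  have [T [bT eT]] := preadj bU.
  have nT : numrad setT NX T = 1 by rewrite -(numrad_adj bT eT).
  have D1 : Dd p.1 by case: Pp.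
  have hT : 1 - eta < `|p.1 (T x)|.
    by move: hU; rewrite hx; [rewrite eT | exact: bU.1].
  have [S [bS nS hS dS]] := heta T bT nT hT.
  exists (adj S); split.
  + exact: adj_bd.
  + by rewrite (@numrad_adj S (adj S) bS).
  + by rewrite hx //; apply: adj_Dd.
  + rewrite (@opnorm_ext _ _ Dd Nd _ (adj (fun v => S v - T v))); last first.
      by move=> g Dg; rewrite eT // adj_sub.
    apply: le_lt_trans dS; apply: opnorm_adj_le; exact: bdo_sub.
- move=> hd eps eps0 [x f] Pq.
  have Pp := Pi_up Hsup HB Pq.
  have [eta eta0 heta] := hd eps eps0 _ Pp.
  exists eta => // T bT nT hT.
  have nT' : numrad Dd Nd (adj T) = 1 by rewrite (@numrad_adj T (adj T) bT).
  have [S' [bS' nS' hS' dS']] := heta _ (adj_bd Hsup bT) nT' hT.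
  have [S [bS eS]] := preadj bS'.
  have Df : Dd f by case: Pq => _ [_ [? _]].
  exists S; split => //.
  + by rewrite -(numrad_adj bS eS).
  + by move: hS'; rewrite /= eS.
  + apply: le_lt_trans (opnorm_adj_ge (bdo_sub bS bT)) _.
    rewrite (@opnorm_ext _ _ Dd Nd _ (fun g => S' g - adj T g)) //.
    by move=> g Dg; rewrite eS // adj_sub.
Qed.

End Dual2.

Section RealHB.
Variables (R : realType) (V : lmodType R) (p : V -> R).
Hypothesis pD : forall u v, p (u + v) <= p u + p v.
Hypothesis pZ : forall (a : R) v, p (a *: v) = `|a| * p v.

Lemma p0 : p 0 = 0.
Proof. by have := pZ 0 0; rewrite scale0r normr0 mul0r. Qed.

Lemma pN v : p (- v) = p v.
Proof. by rewrite -scaleN1r pZ normrN1 mul1r. Qed.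

Lemma p_ge0 v : 0 <= p v.
Proof.
have := pD v (- v); rewrite subrr p0 pN -mulr2n => h.
by rewrite -(pmulrn_lge0 _ (isT : (0 < 2)%N)).
Qed.

Definition goodG (x0 : V) (G : set (V * R)) : Prop :=
  [/\ (forall v r s, G (v, r) -> G (v, s) -> r = s),
      (forall a v r w s, G (v, r) -> G (w, s) -> G (a *: v + w, a * r + s)),
      (forall v r, G (v, r) -> r <= p v) & G (x0, p x0)].

Lemma goodG0 x0 G : goodG x0 G -> G (0, 0).
Proof.
case=> _ cl _ Gx; have := cl (-1) _ _ _ _ Gx Gx.
by rewrite scaleN1r mulN1r !addNr.
Qed.

Lemma goodG_lin x0 G : goodG x0 G -> forall a v r, G (v, r) -> G (a *: v, a * r).
Proof.
move=> gG a v r Gv; have := (let: And4 _ cl _ _ := gG in cl) a _ _ _ _ Gv (goodG0 gG).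
by rewrite !addr0.
Qed.

Lemma goodG_sub x0 G : goodG x0 G -> forall v r w s, G (v, r) -> G (w, s) -> G (v - w, r - s).
Proof.
move=> gG v r w s Gv Gw; have := (let: And4 _ cl _ _ := gG in cl) (-1) _ _ _ _ Gw Gv.
by rewrite scaleN1r mulN1r addrC [- s + r]addrC.
Qed.

Lemma goodG_line x0 : goodG x0 [set z | exists t : R, z = (t *: x0, t * p x0)].
Proof.
split.
- move=> v r s [t [-> ->]] [t' [e ->]].
  have [x00|x0n] := eqVneq x0 0; first by rewrite x00 p0 !mulr0.
  move/eqP: e; rewrite -subr_eq0 -scalerBl scaler_eq0 (negPf x0n) orbF subr_eq0.
  by move/eqP ->.
- move=> a v r w s [t [-> ->]] [t' [-> ->]]; exists (a * t + t').
  by rewrite scalerDl scalerA mulrDl mulrA.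
- move=> v r [t [-> ->]]; rewrite pZ; apply: ler_wpM2r; first exact: p_ge0.
  exact: ler_norm.
- by exists 1; rewrite scale1r mul1r.
Qed.

End RealHB.

Section RealHB2.
Variables (R : realType) (V : lmodType R) (p : V -> R).
Hypothesis pD : forall u v, p (u + v) <= p u + p v.
Hypothesis pZ : forall (a : R) v, p (a *: v) = `|a| * p v.
Variable x0 : V.

Definition goodP (G : set (V * R)) := G = set0 \/ goodG p x0 G.

Lemma goodP_chain (F : set (set (V * R))) : F `<=` goodP -> total_on F subset ->
  goodP (\bigcup_(X in F) X).
Proof.
move=> FP tot.
have [all0|ne] := pselect (forall G, F G -> G = set0).
  rewrite /goodP; left; apply/seteqP; split => // z [G FG Gz]; by rewrite (all0 _ FG) in Gz.
move/existsNP: ne => [G1 /not_implyP [FG1 G1n]].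
have {}G1n : G1 !=set0.
  by apply/set0P/negP => /eqP; exact: G1n.
have good G : F G -> G !=set0 -> goodG p x0 G.
  move=> FG [z Gz]; case: (FP _ FG) => // G0; by rewrite G0 in Gz.
have big G H : F G -> F H -> exists2 M, F M & G `<=` M /\ H `<=` M.
  move=> FG FH; case: (tot _ _ FG FH) => sub; [exists H | exists G] => //; split => //.
rewrite /goodP; right; split.
- move=> v r s [G FG Gr] [H FH Hs]; have [M FM [GM HM]] := big _ _ FG FH.
  have gM := good _ FM (ex_intro _ _ (GM _ Gr)).
  by case: gM => fn _ _ _; apply: fn (GM _ Gr) (HM _ Hs).
- move=> a v r w s [G FG Gr] [H FH Hs]; have [M FM [GM HM]] := big _ _ FG FH.
  have gM := good _ FM (ex_intro _ _ (GM _ Gr)).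
  exists M => //; case: gM => _ cl _ _; exact: cl (GM _ Gr) (HM _ Hs).
- move=> v r [G FG Gr]; have gG := good _ FG (ex_intro _ _ Gr).
  by case: gG => _ _ dom _; apply: dom.
- case: G1n => z G1z; have gG := good _ FG1 (ex_intro _ _ G1z).
  by exists G1 => //; case: gG.
Qed.

End RealHB2.

Section RealHB3.
Variables (R : realType) (V : lmodType R) (p : V -> R).
Hypothesis pD : forall u v, p (u + v) <= p u + p v.
Hypothesis pZ : forall (a : R) v, p (a *: v) = `|a| * p v.
Variable x0 : V.

Lemma goodG_ext (A : set (V * R)) (y : V) : goodG p x0 A -> (forall r, ~ A (y, r)) ->
  exists2 B, goodG p x0 B & A `<` B.
Proof.
move=> gA hy.
have [fnA clA domA Ax0] := gA.
have A00 := goodG0 gA.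
have key v r w s : A (v, r) -> A (w, s) -> r - p (v - y) <= p (w + y) - s.
  move=> Av Aw; have := domA _ _ (clA 1 _ _ _ _ Av Aw); rewrite scale1r mul1r => h.
  rewrite lerBrDr addrAC lerBlDr [p (w + y) + _]addrC; apply: le_trans h _.
  by have := pD (v - y) (w + y); rewrite addrACA addNr addr0.
pose L := [set z.2 - p (z.1 - y) | z in A].
have Ln : L !=set0 by exists (0 - p (0 - y)); exists (0, 0).
have hL : has_sup L.
  split => //; exists (p (0 + y) - 0) => _ [[v r] Av <-]; exact: key Av A00.
pose c := sup L.
have ci v r : A (v, r) -> r - p (v - y) <= c.
  by move=> Av; apply: sup_upper_bound => //; exists (v, r).
have cii w s : A (w, s) -> c <= p (w + y) - s.
  move=> Aw; apply: ge_sup => // _ [[v r] Av <-]; exact: key Av Aw.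
pose B := [set z | exists v r (t : R), A (v, r) /\ z = (v + t *: y, r + t * c)].
have AB : A `<=` B.
  move=> [v r] Av; exists v, r, 0; split => //; by rewrite scale0r mul0r !addr0.
exists B; last first.
  split => // BA; apply: (hy c).
  have : B (y, c) by exists 0, 0, 1; split => //; rewrite scale1r mul1r !add0r.
  by move/BA.
split.
- move=> z r1 r2 [v [r [t [Av [-> ->]]]]] [v' [r' [t' [Av' [e ->]]]]].
  have [tt|tt] := eqVneq t t'.
    move: e; rewrite -tt => /addIr ev; rewrite ev in Av.
    by rewrite (fnA _ _ _ Av Av').
  exfalso; apply: (hy ((t - t')^-1 * (r' - r))).
  have e' : (t - t') *: y = v' - v.
    by rewrite scalerBl; apply/eqP; rewrite subr_eq addrAC -e addrAC subrr add0r.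
  have tn : t - t' != 0 by rewrite subr_eq0.
  have -> : y = (t - t')^-1 *: (v' - v) by rewrite -e' scalerK.
  by apply: (goodG_lin gA); apply: (goodG_sub gA).
- move=> a z1 r1 z2 r2 [v [r [t [Av [-> ->]]]]] [w [s [t' [Aw [-> ->]]]]].
  exists (a *: v + w), (a * r + s), (a * t + t'); split; first exact: clA.
  congr pair.
    by rewrite scalerDr scalerA scalerDl addrACA.
  by rewrite mulrDr mulrA mulrDl addrACA.
- move=> z r1 [v [r [t [Av [-> ->]]]]].
  have [t0|tn0] := eqVneq t 0.
    by rewrite t0 scale0r mul0r !addr0; exact: domA.
  have [tp|tn] := ltP 0 t.
    have Av' := goodG_lin gA (t^-1) Av.
    have h := cii _ _ Av'.
    have e : v + t *: y = t *: (t^-1 *: v + y) by rewrite scalerDr scalerA mulfV // scale1r.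
    rewrite e pZ (gtr0_norm tp).
    have -> : r = t * (t^-1 * r) by rewrite mulrA mulfV // mul1r.
    rewrite -mulrDr ler_pM2l //; lra.
  have tlt : t < 0 by rewrite lt_neqAle tn0.
  have up : 0 < - t by rewrite oppr_gt0.
  have Av' := goodG_lin gA ((- t)^-1) Av.
  have h := ci _ _ Av'.
  have un : - t != 0 by rewrite oppr_eq0.
  have e : v + t *: y = (- t) *: ((- t)^-1 *: v - y).
    by rewrite scalerBr scalerA mulfV // scale1r scaleNr opprK.
  rewrite e pZ (gtr0_norm up).
  have -> : r = (- t) * ((- t)^-1 * r) by rewrite mulrA mulfV // mul1r.
  have -> : t * c = (- t) * (- c) by rewrite mulrNN.
  rewrite -mulrDr ler_pM2l //.
  lra.
- by exists x0, (p x0), 0; split => //; rewrite scale0r mul0r !addr0.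
Qed.

Lemma real_HB : exists f : V -> R,
  [/\ (forall a u v, f (a *: u + v) = a * f u + f v),
      (forall v, f v <= p v) & f x0 = p x0].
Proof.
have [A [PA Amax]] := Zorn_bigcup (@goodP_chain R V p x0).
have gA : goodG p x0 A.
  case: PA => // A0; exfalso.
  apply: (Amax [set z | exists t : R, z = (t *: x0, t * p x0)]).
    rewrite A0; split => // h; have := h (x0, p x0).
    by move=> /(_ (ex_intro _ 1 _)); rewrite scale1r mul1r => /(_ erefl).
  by right; apply: goodG_line.
have tot v : exists r, A (v, r).
  apply: contrapT => nex.
  have [B gB AB] := goodG_ext gA (fun r Ar => nex (ex_intro _ r Ar)).
  by apply: (Amax B AB); right.
have [fnA clA domA Ax0] := gA.
pose f v := xget 0 [set r | A (v, r)].
have Af v : A (v, f v) by apply: (xgetPex 0 (tot v)).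
exists f; split.
- by move=> a u v; apply: fnA (Af _) (clA _ _ _ _ _ (Af u) (Af v)).
- by move=> v; apply: domA.
- exact: fnA (Af _) Ax0.
Qed.

End RealHB3.

Section ComplexHB.
Variable R : realType.
Local Notation Re := complex.Re.
Local Notation Im := complex.Im.
Local Open Scope complex_scope.

Lemma ge0_realC (z : R[i]) : 0 <= z -> z = (Re z)%:C.
Proof. by case: z => a b; rewrite lecE /= => /andP[/eqP -> _]. Qed.

Lemma normC_real (r : R) : `|r%:C| = `|r|%:C.
Proof.
by rewrite normc_def /= expr0n /= addr0 sqrtr_sqr.
Qed.

Variable X : normedModType R[i].

Definition realify : Type := X.
HB.instance Definition _ := GRing.Zmodule.on realify.

Definition rscale (r : R) (v : realify) : realify := (r%:C : R[i]) *: (v : X).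

Lemma rscaleA a b v : rscale a (rscale b v) = rscale (a * b) v.
Proof. by rewrite /rscale scalerA -rmorphM. Qed.
Lemma rscale1 : left_id 1 rscale.
Proof. by move=> v; rewrite /rscale rmorph1 scale1r. Qed.
Lemma rscaleDr : right_distributive rscale +%R.
Proof. by move=> a u v; rewrite /rscale scalerDr. Qed.
Lemma rscaleDl v : {morph rscale^~ v : a b / a + b}.
Proof. by move=> a b; rewrite /rscale rmorphD scalerDl. Qed.

HB.instance Definition _ := GRing.Zmodule_isLmodule.Build R realify
  rscaleA rscale1 rscaleDr rscaleDl.

End ComplexHB.

Section ComplexHB2.
Variable R : realType.
Local Notation Re := complex.Re.
Local Notation Im := complex.Im.
Local Open Scope complex_scope.
Variable X : normedModType R[i].

Definition pR (v : realify X) : R := Re `|(v : X)|.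

Lemma pR_D u v : pR (u + v) <= pR u + pR v.
Proof.
rewrite /pR; have := ler_normD (u : X) (v : X); rewrite lecE => /andP[_].
by case: (`|(u : X)|) => a b; case: (`|(v : X)|).
Qed.

Lemma pR_Z (a : R) v : pR (a *: v) = `|a| * pR v.
Proof.
rewrite /pR; change (a *: v) with ((a%:C : R[i]) *: (v : X)).
rewrite normrZ normC_real (ge0_realC (normr_ge0 (v : X))) /=.
by rewrite mulr0 subr0.
Qed.

Lemma complex_HB (x : X) : exists f : X -> R[i],
  [/\ (forall (a : R[i]) u v, f (a *: u + v) = a * f u + f v),
      (forall v, `|f v| <= `|v|) & f x = `|x|].
Proof.
have [u [ulin udom ux]] := real_HB pR_D pR_Z (x : realify X).
pose u' : X -> R := fun v => u v.
have ulin' (a : R) (v w : X) : u' ((a%:C : R[i]) *: v + w) = a * u' v + u' w.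
  exact: ulin.
have uD (v w : X) : u' (v + w) = u' v + u' w.
  by have := ulin' 1 v w; rewrite mul1r rmorph1 scale1r.
have u0 : u' 0 = 0.
  have := uD 0 0; rewrite addr0 => h; by apply: (addrI (u' 0)); rewrite addr0 -h.
have uZ (r : R) (v : X) : u' ((r%:C : R[i]) *: v) = r * u' v.
  by have := ulin' r v 0; rewrite addr0 u0 addr0.
have uN (v : X) : u' (- v) = - u' v.
  have := uZ (-1) v; rewrite rmorphN1 scaleN1r => ->; by rewrite mulN1r.
pose f (v : X) : R[i] := (u' v)%:C - 'i * (u' ('i *: v))%:C.
have fD v w : f (v + w) = f v + f w.
  by rewrite /f scalerDr !uD !rmorphD; ring.
have fR (r : R) v : f ((r%:C : R[i]) *: v) = r%:C * f v.
  rewrite /f (uZ r v) scalerA [_ * r%:C]mulrC -scalerA (uZ r ('i *: v)) !rmorphM; ring.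
have fI v : f ('i *: v) = 'i * f v.
  rewrite /f scalerA -expr2 sqr_i scaleN1r (uN v) rmorphN.
  rewrite mulrBr mulrA -expr2 sqr_i; ring.
have flin (a : R[i]) v w : f (a *: v + w) = a * f v + f w.
  rewrite fD; congr (_ + _).
  rewrite (complexE a) scalerDl fD mulrDl fR; congr (_ + _).
  by rewrite mulrC -scalerA fR fI mulrA.
have fRe v : Re (f v) = u' v.
  by rewrite /f /= mul0r mul1r subr0 subr0.
have fb v : `|f v| <= `|v|.
  have [w0|wn] := eqVneq (f v) 0; first by rewrite w0 normr0.
  pose l := `|f v| / f v.
  have l1 : `|l| = 1 by rewrite /l normf_div normr_id divff // normr_eq0.
  have fl : f (l *: v) = `|f v|.
    have f0 : f 0 = 0.
      by have := fD 0 0; rewrite addr0 => h; apply: (addrI (f 0)); rewrite addr0 -h.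
    by have := flin l v 0; rewrite addr0 f0 addr0 => ->; rewrite /l mulfVK.
  have hRe : Re `|f v| <= Re `|v|.
    rewrite -fl fRe; apply: le_trans (udom (l *: v : realify X)) _.
    by rewrite /pR normrZ l1 mul1r.
  by rewrite (ge0_realC (normr_ge0 (f v))) (ge0_realC (normr_ge0 v)) lecR.
exists f; split => //.
have Rfx : Re (f x) = Re `|x| by rewrite fRe /u' ux.
have h2 : `|f x| ^+ 2 <= `|x| ^+ 2.
  by apply: lerXn2r; rewrite ?nnegrE ?normr_ge0 //; exact: fb.
rewrite -add_Re2_Im2 (ge0_realC (normr_ge0 x)) -rmorphXn lecR Rfx in h2.
have Im0 : Im (f x) = 0.
  apply/eqP; rewrite -sqrf_eq0 eq_le sqr_ge0 andbT; lra.
rewrite (ge0_realC (normr_ge0 x)) -Rfx.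
by case: (f x) Im0 => a b /= ->.
Qed.

End ComplexHB2.

Lemma HB_norm_real (R : realType) (X : normedModType R) (x : X) :
  exists g : X -> R^o, dual_set g /\ dual_norm g <= 1 /\ g x = `|x|.
Proof.
have pD : forall u v : X, `|u + v| <= `|u| + `|v| by move=> u v; exact: ler_normD.
have pZ : forall (a : R) (v : X), `|a *: v| = `|a| * `|v| by move=> a v; exact: normrZ.
have [f [flin fdom fx]] := real_HB pD pZ x.
have f0 : f 0 = 0.
  by have := flin 1 0 0; rewrite scale1r addr0 mul1r => h; apply: (addrI (f 0)); rewrite addr0 -h.
have fb v : `|f v| <= `|v|.
  rewrite ler_norml fdom andbT.
  have := fdom (- v); have := flin (-1) v 0; rewrite addr0 f0 addr0 scaleN1r mulN1r => ->.
  by rewrite normrN lerNl.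
have Df : dual_set (f : X -> R^o).
  by split; [move=> a u v _ _; exact: flin | exists 1 => v _; rewrite mul1r; exact: fb].
exists f; split => //; split => //.
by rewrite /dual_norm; apply: (fnorm_le (@sup_ok_real R)) => v v1; apply: le_trans (fb v) v1.
Qed.

Lemma HB_norm_complex (R : realType) (X : normedModType R[i]) (x : X) :
  exists g : X -> R[i]^o, dual_set g /\ dual_norm g <= 1 /\ g x = `|x|.
Proof.
have [f [flin fb fx]] := complex_HB x.
have Df : dual_set (f : X -> R[i]^o).
  by split; [move=> a u v _ _; exact: flin | exists 1 => v _; rewrite mul1r; exact: fb].
exists f; split => //; split => //.
by rewrite /dual_norm; apply: (fnorm_le (@sup_ok_complex R)) => v v1; apply: le_trans (fb v) v1.
Qed.

Theorem proposition3p12 (R : realType) :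
  (forall X : completeNormedModType R,
     reflexive_space X -> (has_Lpp_nu X <-> dual_has_Lpp_nu X))
  /\
  (forall X : completeNormedModType R[i],
     reflexive_space X -> (has_Lpp_nu X <-> dual_has_Lpp_nu X)).
Proof.
split => X refl.
- exact: (Lpp_dual_equiv (@sup_ok_real R) (@HB_norm_real R X) refl).
- exact: (Lpp_dual_equiv (@sup_ok_complex R) (@HB_norm_complex R X) refl).
Qed.
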